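(* Let $G$ be a topological groupoid and $f\colon T\to G^{(0)}$ a continuous map. (a) If $G$ is proper, then $G[T]$ is proper. (b) If $G[T]$ is proper and $f$ is open and surjective, then $G$ is proper.
   Context: $G[T]=\{(t',t,g)\in(T\times T)\times G: g\in G^{f(t')}_{f(t)}\}$, a subgroupoid of the product of the pair groupoid $T\times T$ (product $(x,y)(y,z)=(x,z)$) with $G$, with the subspace topology; its unit space is $T$. A continuous map is proper if it is closed and has quasi-compact fibres (quasi-compact: every open cover has a finite subcover). A topological groupoid $H$ is proper if $(r,s)\colon H\to H^{(0)}\times H^{(0)}$ is proper. *)

(* Defs.v *)
From HB Require Import structures.
From mathcomp Require Import all_boot all_order.
From mathcomp Require Import all_classical topology.
Set Implicit Arguments. Unset Strict Implicit. Unset Printing Implicit Defensive.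
Local Open Scope classical_set_scope.

(* The unit space is a separate topological space X, embedded in G by [tg_u]
   (the embedding is automatically a homeomorphism onto its image since
   tg_r \o tg_u = id with tg_r continuous).  Composition [tg_mul g h] = g h is
   meaningful when tg_s g = tg_r h (arrows go from source to range). *)
Record topGroupoid (G X : topologicalType) := TopGroupoid {
  tg_r : G -> X;
  tg_s : G -> X;
  tg_u : X -> G;
  tg_mul : G -> G -> G;
  tg_inv : G -> G;
  tg_r_u : forall x, tg_r (tg_u x) = x;
  tg_s_u : forall x, tg_s (tg_u x) = x;
  tg_r_mul : forall g h, tg_s g = tg_r h -> tg_r (tg_mul g h) = tg_r g;
  tg_s_mul : forall g h, tg_s g = tg_r h -> tg_s (tg_mul g h) = tg_s h;
  tg_mulA : forall g h k, tg_s g = tg_r h -> tg_s h = tg_r k ->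
     tg_mul g (tg_mul h k) = tg_mul (tg_mul g h) k;
  tg_mul_ul : forall g, tg_mul (tg_u (tg_r g)) g = g;
  tg_mul_ur : forall g, tg_mul g (tg_u (tg_s g)) = g;
  tg_r_inv : forall g, tg_r (tg_inv g) = tg_s g;
  tg_s_inv : forall g, tg_s (tg_inv g) = tg_r g;
  tg_mulV : forall g, tg_mul g (tg_inv g) = tg_u (tg_r g);
  tg_mulVl : forall g, tg_mul (tg_inv g) g = tg_u (tg_s g);
  tg_r_cont : continuous tg_r;
  tg_s_cont : continuous tg_s;
  tg_u_cont : continuous tg_u;
  tg_inv_cont : continuous tg_inv;
  tg_mul_cont : {within [set p : G * G | tg_s p.1 = tg_r p.2],
                  continuous (fun p : G * G => tg_mul p.1 p.2)}
}.

(* Properness of a map h : A -> B restricted to the subspace D of A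
   (with the subspace topology): h|_D is closed (relatively closed subsets of
   D have closed image) and has quasi-compact fibres.  Compactness of a
   subset of D in the subspace topology coincides with [compact] in A. *)
Definition proper_on (A B : topologicalType) (D : set A) (h : A -> B) : Prop :=
  (forall C : set A, (exists F : set A, closed F /\ C = D `&` F) ->
      closed (h @` C)) /\
  (forall b : B, compact (D `&` h @^-1` [set b])).

Definition proper_groupoid (G X : topologicalType) (Gr : topGroupoid G X) : Prop :=
  proper_on setT (fun g : G => (tg_r Gr g, tg_s Gr g)).

(* Arrow space of the pullback groupoid G[T] = {(t',t,g) | g in G^{f t'}_{f t}}
   as a subspace of (T x T) x G.  Its unit space is T, with range and source
   maps (t',t,g) |-> t' and (t',t,g) |-> t respectively. *)
Definition pullback_arrows (G X T : topologicalType) (Gr : topGroupoid G X)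
  (f : T -> X) : set ((T * T) * G) :=
  [set p | tg_r Gr p.2 = f p.1.1 /\ tg_s Gr p.2 = f p.1.2].

Definition proper_pullback (G X T : topologicalType) (Gr : topGroupoid G X)
  (f : T -> X) : Prop :=
  proper_on (pullback_arrows Gr f) (fun p : (T * T) * G => (p.1.1, p.1.2)).

Definition open_map (A B : topologicalType) (h : A -> B) : Prop :=
  forall U : set A, open U -> open (h @` U).

(* Main.v *)
Require Import Defs.
From mathcomp Require Import all_boot all_order.
From mathcomp Require Import all_classical topology.
Set Implicit Arguments. Unset Strict Implicit. Unset Printing Implicit Defensive.
Local Open Scope classical_set_scope.

Lemma fst_cont (A B : topologicalType) : continuous (@fst A B).
Proof. by move=> p; exact: cvg_fst. Qed.
Lemma snd_cont (A B : topologicalType) : continuous (@snd A B).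
Proof. by move=> p; exact: cvg_snd. Qed.
Lemma pair_cont (A B C : topologicalType) (g : A -> B) (h : A -> C) :
  continuous g -> continuous h -> continuous (fun x => (g x, h x)).
Proof. by move=> cg ch x; apply: cvg_pair; [exact: cg | exact: ch]. Qed.

Lemma ff_cont (T X : topologicalType) (f : T -> X) : continuous f ->
  continuous (fun p : T * T => (f p.1, f p.2)).
Proof.
move=> fc; apply: pair_cont.
  by move=> p; exact: (@continuous_comp _ _ _ fst f p (@fst_cont _ _ p) (fc _)).
by move=> p; exact: (@continuous_comp _ _ _ snd f p (@snd_cont _ _ p) (fc _)).
Qed.

Lemma ff_open (T X : topologicalType) (f : T -> X) : open_map f ->
  open_map (fun p : T * T => (f p.1, f p.2)).
Proof.
move=> fo U oU; rewrite openE => _ [[a b] Uab <-].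
have : nbhs (a, b) U by apply: open_nbhs_nbhs.
case=> [[A B] /= [nA nB] sAB].
move: nA nB; rewrite !nbhsE => -[A' [oA' A'a] sA'] [B' [oB' B'b] sB'].
exists (f @` A', f @` B') => /=.
  split; apply: open_nbhs_nbhs; split; [exact: fo | by exists a | exact: fo | by exists b].
move=> [x y] /= [[a' A'a' <-] [b' B'b' <-]].
by exists (a', b') => //; apply: sAB; split; [exact: sA' | exact: sB'].
Qed.
Lemma tube (Z Y : topologicalType) (z : Z) (K : set Y) (W : set (Z * Y)) :
  compact K -> open W -> (forall y, K y -> W (z, y)) ->
  exists U V, [/\ nbhs z U, open V, K `<=` V & forall u v, U u -> V v -> W (u, v)].
Proof.
move=> /compact_near_coveringP cK oW KW.
pose P (U : set Z) (x : Y) := exists B, [/\ open B, B x & forall u b, U u -> B b -> W (u, b)].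
have : \forall U \near powerset_filter_from (nbhs z), K `<=` P U.
  apply: cK => x Kx.
  have : nbhs (z, x) W by apply: open_nbhs_nbhs; split => //; exact: KW.
  case=> [[A B] /= [nA nB] sAB].
  move: nB; rewrite nbhsE => -[B' [oB' B'x] sB'].
  exists (B', [set U | U `<=` A]) => /=.
    split; first exact: open_nbhs_nbhs.
    exact: small_set_sub.
  move=> [x' U] /= [B'x' UA]; exists B'; split => // u b Uu Bb.
  by apply: sAB; split => //=; [exact: UA | exact: sB'].
rewrite near_powerset_filter_fromP; last first.
  move=> A B AB PB x /PB [B0 [oB0 B0x H]]; exists B0; split => // u b Au Bb.
  by apply: H => //; exact: AB.
move=> [U nU KPU].
exists U, [set y | P U y]; split => //.
- rewrite openE => y [B [oB By H]].
  rewrite /interior; apply: (@filterS _ _ _ B); last exact: open_nbhs_nbhs.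
  by move=> b Bb; exists B.
- by move=> u v Uu [B [_ Bv H]]; exact: H.
Qed.

Theorem proposition2p22 (G X T : topologicalType) (Gr : topGroupoid G X)
  (f : T -> X) (f_cont : continuous f) :
  (proper_groupoid Gr -> proper_pullback Gr f) /\
  (proper_pullback Gr f -> open_map f -> (forall x : X, exists t : T, f t = x) ->
     proper_groupoid Gr).
Proof.
have rho_cont : continuous (fun g : G => (tg_r Gr g, tg_s Gr g)).
  by apply: pair_cont; [exact: tg_r_cont | exact: tg_s_cont].
split.
  move=> [Hcl Hfib]; split.
    move=> C [F [cF ->]]; rewrite -openC openE => z nz; rewrite /interior.
    pose K := [set: G] `&` (fun g => (tg_r Gr g, tg_s Gr g)) @^-1` [set (f z.1, f z.2)].
    have cK : compact K := Hfib (f z.1, f z.2).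
    have [U [V [nU oV KV UVW]]] : exists U V, [/\ nbhs z U, open V, K `<=` V &
        forall u v, U u -> V v -> (~` F) (u, v)].
      apply: tube => //; first exact: closed_openC.
      move=> y [_ [e1 e2]] Fzy; apply: nz; exists (z, y); last by rewrite /= -surjective_pairing.
      by split.
    pose N := ~` ((fun g => (tg_r Gr g, tg_s Gr g)) @` ([set: G] `&` ~` V)).
    have oN : open N.
      apply: closed_openC; apply: Hcl; exists (~` V); split => //.
      exact: open_closedC.
    have Nz : N (f z.1, f z.2).
      by move=> [g [_ nVg] eg]; apply: nVg; apply: KV; split.
    have nN : nbhs z ((fun p : T * T => (f p.1, f p.2)) @^-1` N).
      have := @ff_cont T X f f_cont z; apply. apply: open_nbhs_nbhs. split => //=.
    apply: filterS (filterI nU nN) => -[a b] [Uab Nab] [[[a' b'] g] [Pg Fc]].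
    rewrite /pullback_arrows /= in Pg; case: Pg => e1 e2 [ea eb].
    subst a' b'.
    have Vg : V g.
      apply: contrapT => nVg; apply: Nab; exists g => //=.
      by rewrite e1 e2.
    exact: (UVW (a, b) g Uab Vg Fc).
  move=> [t1 t2].
  have -> : pullback_arrows Gr f `&` (fun p : (T * T) * G => (p.1.1, p.1.2)) @^-1` [set (t1, t2)]
      = (fun g => ((t1, t2), g)) @` ([set: G] `&` (fun g => (tg_r Gr g, tg_s Gr g)) @^-1` [set (f t1, f t2)]).
    rewrite eqEsubset; split.
      move=> [[a b] g] [[/= e1 e2] [ea eb]]; subst a b.
      by exists g => //; split => //=; rewrite e1 e2.
    by move=> _ [g [_ [e1 e2]] <-]; split.
  apply: continuous_compact; last exact: Hfib.
  apply: continuous_subspaceT; apply: pair_cont => //.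
  by move=> g; exact: cvg_cst.
  by move=> g; exact: cvg_id.
move=> [Hcl Hfib] fo fs; rewrite /proper_groupoid /proper_on; split.
  move=> C [F [cF ->]].
  pose S := (fun p : (T * T) * G => (p.1.1, p.1.2)) @` (pullback_arrows Gr f `&` (fun p : (T * T) * G => F p.2)).
  have cS : closed S.
    apply: Hcl; exists (fun p : (T * T) * G => F p.2); split => //.
    apply: (@preimage_closed _ _ snd F) => //.
    by move=> p _; exact: snd_cont.
  have -> : (fun g => (tg_r Gr g, tg_s Gr g)) @` ([set: G] `&` F) =
      ~` ((fun p : T * T => (f p.1, f p.2)) @` (~` S)).
    rewrite eqEsubset; split.
      move=> _ [g [_ Fg] <-] [[a b] nS /= [ea eb]]; apply: nS.
      by exists ((a, b), g) => //; split => //; split.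
    move=> [x y] nxy; apply: contrapT => nI; apply: nxy.
    have [a ea] := fs x; have [b eb] := fs y.
    exists (a, b); last by rewrite /= ea eb.
    move=> [[[a' b'] g] [[/= e1 e2] Fg] [ea' eb']]; subst a' b'.
    by apply: nI; exists g => //; rewrite e1 e2 ea eb.
  rewrite -openC setCK; apply: ff_open => //.
  exact: closed_openC.
move=> [x y].
have [a ea] := fs x; have [b eb] := fs y.
have -> : [set: G] `&` (fun g => (tg_r Gr g, tg_s Gr g)) @^-1` [set (x, y)] =
    snd @` (pullback_arrows Gr f `&` (fun p : (T * T) * G => (p.1.1, p.1.2)) @^-1` [set (a, b)]).
  rewrite eqEsubset; split.
    move=> g [_ [e1 e2]]; exists ((a, b), g) => //.
    by split => //; split => /=; [rewrite e1 ea | rewrite e2 eb].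
  move=> _ [[[a' b'] g] [[/= e1 e2] [ea' eb']] <-]; subst a' b'.
  by split => //=; rewrite e1 e2 ea eb.
apply: continuous_compact; last exact: Hfib.
by apply: continuous_subspaceT; exact: snd_cont.
Qed.
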